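(* Let $A$ be a nonempty set of positive integers and let $n$ be a positive integer. Then (a) $\displaystyle cl_A(n)=\sum_{k=0}^{n-1}cl_A(k)\,\tau^s_A(n-k)$; (b) $\displaystyle\sum_{k=0}^{n}cl_A(k)\,q_A(n-k)-\sum_{t=0}^{n-1}cl_A(t)\,N^q_A(n-t)=q_A(n)$.
   Context: A composition of $m$ is an ordered sequence of positive integers summing to $m$; it is Carlitz if each part differs from its adjacent parts. $cl_A(m)$ is the number of Carlitz compositions of $m$ with all parts in $A$, with $cl_A(0)=1$. $q_A(m)$ is the number of partitions of $m$ into pairwise distinct parts from $A$ ($q_A(0)=1$), and $N^q_A(m)$ is the total number of parts over all such partitions. $\tau^s_A(m)=\sum_{a\in A,\,a\mid m}(-1)^{m/a-1}$. *)

(* Defs.v *)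
From HB Require Import structures.
From mathcomp Require Import all_boot all_order all_algebra.
Set Implicit Arguments. Unset Strict Implicit. Unset Printing Implicit Defensive.
Import Order.TTheory GRing.Theory Num.Theory.

Fixpoint seqs_of (l : nat) (xs : seq nat) : seq (seq nat) :=
  match l with
  | 0 => [:: [::]]
  | l'.+1 => [seq x :: s | x <- xs, s <- seqs_of l' xs]
  end.

(* all compositions of m: sequences of positive integers summing to m
   (such a sequence has length <= m and parts in 1..m) *)
Definition compositions (m : nat) : seq (seq nat) :=
  flatten [seq [seq s <- seqs_of l (iota 1 m) | sumn s == m] | l <- iota 0 m.+1].

Definition carlitz (s : seq nat) : bool :=
  if s is x :: s' then path (fun a b => a != b) x s' else true.

Definition cl (A : pred nat) (m : nat) : nat :=
  count (fun s => all A s && carlitz s) (compositions m).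

(* partitions of m into pairwise distinct parts from A, as subsets of {0..m} *)
Definition distinct_partitions (A : pred nat) (m : nat) : {set {set 'I_m.+1}} :=
  [set S : {set 'I_m.+1} | [forall i in S, A i] && (\sum_(i in S) (i : nat) == m)].

Definition qA (A : pred nat) (m : nat) : nat := #|distinct_partitions A m|.

Definition NqA (A : pred nat) (m : nat) : nat :=
  \sum_(S in distinct_partitions A m) #|S|.

Definition tauS (A : pred nat) (m : nat) : int :=
  \sum_(1 <= a < m.+1 | A a && (a %| m)) (-1) ^+ (m %/ a).-1.

(* Main.v *)
Require Import Defs.
From mathcomp Require Import all_boot all_order all_algebra zify.
Import Order.TTheory GRing.Theory Num.Theory.
Set Implicit Arguments. Unset Strict Implicit.

Lemma mem_seqs_of l xs s :
  (s \in seqs_of l xs) = (size s == l) && all (mem xs) s.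
Proof.
elim: l s => [|l IH] [|x t] //=.
- by apply/allpairsP => -[[y u] /= [_ _]].
- apply/allpairsP/idP => [[[y u] /= [Hy Hu [-> ->]]]|/andP[Hs /andP[Hx Ht]]].
    by move: Hu; rewrite IH => /andP[/eqP-> ->]; rewrite eqxx Hy.
  by exists (x, t); split => //=; rewrite IH -eqSS Hs Ht.
Qed.

Lemma uniq_seqs_of l xs : uniq xs -> uniq (seqs_of l xs).
Proof.
move=> Ux; elim: l => [|l IH] //=.
apply: allpairs_uniq => // -[x s] [y t] _ _ /= [-> ->] //.
Qed.

Lemma sumn_pos_size s : all (fun x => 0 < x) s -> size s <= sumn s.
Proof. elim: s => //= x s IH /andP[Hx Hs]; have := IH Hs; lia. Qed.

Lemma mem_sumn s x : x \in s -> x <= sumn s.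
Proof. elim: s => //= y s IH; rewrite in_cons => /orP[/eqP->|/IH]; lia. Qed.

Lemma mem_compositions m s :
  (s \in compositions m) = all (fun x => 0 < x) s && (sumn s == m).
Proof.
apply/flatten_mapP/idP => [[l _]|/andP[Hp /eqP Hs]].
  rewrite mem_filter mem_seqs_of => /andP[-> /andP[_ Ha]]; rewrite andbT.
  apply/allP => x /(allP Ha); rewrite inE mem_iota; lia.
exists (size s); first by rewrite mem_iota; have := sumn_pos_size Hp; rewrite Hs /=; lia.
rewrite mem_filter Hs eqxx mem_seqs_of eqxx /=.
apply/allP => x Hx; rewrite inE mem_iota; have := mem_sumn Hx.
by have := allP Hp x Hx; rewrite Hs; lia.
Qed.

Lemma uniq_flatten_size (T : eqType) (L : seq nat) (F : nat -> seq (seq T)) :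
  uniq L -> (forall l, uniq (F l)) -> (forall l s, s \in F l -> size s = l) ->
  uniq (flatten (map F L)).
Proof.
move=> UL UF SF; elim: L UL => //= l L IH /andP[Hl UL].
rewrite cat_uniq UF IH // andbT /=; apply/hasPn => s /flatten_mapP[l' Hl' Hs].
apply/negP => Hs'; have E : l = l' by rewrite -(SF _ _ Hs') (SF _ _ Hs).
by move: Hl; rewrite E Hl'.
Qed.

Lemma uniq_compositions m : uniq (compositions m).
Proof.
apply: uniq_flatten_size; first exact: iota_uniq.
  by move=> l; rewrite filter_uniq // uniq_seqs_of // iota_uniq.
by move=> l s; rewrite mem_filter mem_seqs_of => /andP[_ /andP[/eqP]].
Qed.

Definition Pc (A : pred nat) (s : seq nat) := all A s && carlitz s.
Definition Kc (A : pred nat) m a :=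
  count (fun s => Pc A s && (ohead s == Some a)) (compositions m).

Lemma count_split (T : Type) (p q : pred T) s :
  count (fun x => p x && ~~ q x) s + count (fun x => p x && q x) s = count p s.
Proof. elim: s => //= x s IH; case: (p x); case: (q x) => /=; lia. Qed.

Lemma Kc_big A m a : (m < a)%N -> Kc A m a = 0%N.
Proof.
move=> ma; apply/eqP; rewrite -leqn0 leqNgt -has_count; apply/hasP => -[s].
rewrite mem_compositions => /andP[_ /eqP Hs] /andP[_].
case: s Hs => //= x t Hs /eqP[Hx]; lia.
Qed.

Lemma Kc_rec A m a : (0 < a)%N -> (a <= m)%N ->
  Kc A m a = (A a * (cl A (m - a) - Kc A (m - a) a))%N.
Proof.
move=> a0 am.
rewrite /Kc -(count_filter (Pc A) (fun s => ohead s == Some a)).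
have P : perm_eq [seq s <- compositions m | ohead s == Some a]
                 [seq a :: t | t <- compositions (m - a)].
  apply: uniq_perm.
  - by rewrite filter_uniq // uniq_compositions.
  - by rewrite map_inj_uniq ?uniq_compositions // => x y [].
  move=> [|x t]; rewrite mem_filter /=.
    by apply/esym/mapP => -[].
  apply/idP/mapP => [/andP[/eqP[->]]|[u Hu [-> ->]]].
    rewrite mem_compositions /= => /andP[/andP[_ Ht] /eqP Hs].
    by exists t => //; rewrite mem_compositions Ht /=; apply/eqP; lia.
  move: Hu; rewrite !mem_compositions /= => /andP[-> /eqP Hs].
  by rewrite eqxx a0 /=; apply/eqP; lia.
rewrite (permP P) count_map.
rewrite /cl /Kc -(count_split (fun s => all A s && carlitz s) (fun s => ohead s == Some a)).
rewrite addnK.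
case: (boolP (A a)) => Aa /=; last first.
  by apply/eqP; rewrite -leqn0 leqNgt -has_count; apply/hasP => -[s _]; rewrite /Pc /= (negbTE Aa).
rewrite mul1n; apply: eq_count => -[|y t] //=; rewrite /Pc /= Aa /=.
  by [].
rewrite [Some y == _]eq_sym (inj_eq (@Some_inj _)).
by case: (A y) => //=; case: (all A t) => //=; rewrite andbC.
Qed.

Lemma count_head (p : pred (seq nat)) m L :
  (forall s, s \in L -> exists x t, [/\ s = x :: t, 0 < x & x <= m]%N) ->
  count p L = (\sum_(1 <= a < m.+1) count (fun s => p s && (ohead s == Some a)) L)%N.
Proof.
elim: L => [|s L IH] HL /=; first by rewrite big1.
rewrite big_split /= -IH; last by move=> u Hu; apply: HL; rewrite in_cons Hu orbT.
congr (_ + _)%N.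
have [x [t [-> x0 xm]]] := HL s (mem_head _ _).
case: (p (x :: t)) => /=; last by rewrite big1.
have -> : (\sum_(1 <= a < m.+1) (Some x == Some a) = \sum_(1 <= a < m.+1 | x == a) 1)%N.
  by rewrite [RHS]big_mkcond; apply: eq_bigr => a _; rewrite (inj_eq (@Some_inj _)); case: (x == a).
rewrite sum1_count (@eq_count _ _ (pred1 x)); last by move=> y; rewrite /= eq_sym.
rewrite count_uniq_mem ?iota_uniq // mem_index_iota; apply/esym/eqP; rewrite eqb1; lia.
Qed.

Lemma cl_split A m : (0 < m)%N -> cl A m = (\sum_(1 <= a < m.+1) Kc A m a)%N.
Proof.
move=> m0; rewrite /cl /Kc (@count_head _ m) //.
move=> [|x t]; rewrite mem_compositions /=; first by move/eqP; lia.
move=> /andP[Hp /eqP Hs].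
exists x, t; split => //; first by case/andP: Hp.
lia.
Qed.
Definition Dp (A : pred nat) B m : {set {set 'I_B.+1}} :=
  [set S : {set 'I_B.+1} | [forall i in S, A i] && (\sum_(i in S) (i : nat) == m)].

Lemma mem_le_sum n (S : {set 'I_n}) (i : 'I_n) : i \in S -> (i <= \sum_(j in S) (j : nat))%N.
Proof. by move=> H; rewrite (big_setD1 _ H) /= leq_addr. Qed.

Section Transfer.
Variables (A : pred nat) (B m : nat) (mB : (m <= B)%N).
Let w : 'I_m.+1 -> 'I_B.+1 := widen_ord (mB : (m.+1 <= B.+1)%N).
Let phi (S : {set 'I_m.+1}) : {set 'I_B.+1} := w @: S.
Lemma w_inj : injective w.
Proof. by move=> i j H; apply: val_inj; move: (congr1 val H). Qed.

Lemma Dp_im : Dp A B m = [set phi S | S in distinct_partitions A m].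
Proof.
apply/setP => T; rewrite inE; apply/idP/imsetP.
  move=> /andP[/forallP HA /eqP Hs].
  have HT : T = phi [set j | w j \in T].
    apply/setP => i; apply/idP/imsetP => [Hi|[j]]; last by rewrite inE => Hj ->.
    have im : (i < m.+1)%N by rewrite ltnS -Hs mem_le_sum.
    have E : w (Ordinal im) = i by apply: val_inj.
    by exists (Ordinal im); rewrite ?inE ?E.
  exists [set j | w j \in T] => //.
  rewrite inE; apply/andP; split.
    by apply/forallP => j; apply/implyP; rewrite inE => Hj; have := implyP (HA (w j)) Hj.
  apply/eqP; rewrite -[in RHS]Hs [in RHS]HT big_imset //=; by move=> i j _ _; apply: w_inj.
move=> [S]; rewrite inE => /andP[/forallP HA /eqP Hs] ->.
apply/andP; split.
  apply/forallP => i; apply/implyP => /imsetP[j Hj ->]; exact: (implyP (HA j) Hj).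
by rewrite big_imset /=; [rewrite Hs | move=> i j _ _; apply: w_inj].
Qed.

Lemma qA_Dp : qA A m = #|Dp A B m|.
Proof.
rewrite Dp_im card_in_imset //; move=> S1 S2 _ _; exact: (imset_inj w_inj).
Qed.

Lemma NqA_Dp : NqA A m = (\sum_(S in Dp A B m) #|S|)%N.
Proof.
rewrite Dp_im big_imset /=; last by move=> S1 S2 _ _; exact: (imset_inj w_inj).
by apply: eq_bigr => S _; rewrite card_imset //; exact: w_inj.
Qed.
End Transfer.

Definition Mp (A : pred nat) B m a :=
  #|Dp A B m :&: [set S : {set 'I_B.+1} | inord a \in S]|.

Lemma val_inord B a : val (inord a : 'I_B.+1) = if (a <= B)%N then a else 0%N.
Proof. by rewrite /inord val_insubd ltnS. Qed.

Section Mrec.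
Variables (A : pred nat) (B : nat).
Hypothesis Apos : forall a, A a -> (0 < a)%N.

Lemma Mp_big m a : (m <= B)%N -> (m < a)%N -> Mp A B m a = 0%N.
Proof.
move=> mB ma; apply/eqP; rewrite cards_eq0; apply/eqP/setP => S.
rewrite !inE; apply/negP => /andP[/andP[/forallP HA /eqP Hs] Hx].
have := implyP (HA _) Hx; have := mem_le_sum Hx; rewrite Hs.
rewrite val_inord; case: (leqP a B) => aB.
  by lia.
by move=> _ /Apos.
Qed.

Lemma Mp_rec m a : (m <= B)%N -> (0 < a)%N -> (a <= m)%N ->
  Mp A B m a = (A a * (#|Dp A B (m - a)| - Mp A B (m - a) a))%N.
Proof.
move=> mB a0 am.
set x : 'I_B.+1 := inord a.
have xa : val x = a by rewrite /x val_inord; case: leqP => //; lia.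
have cD := cardsID [set S : {set 'I_B.+1} | x \in S] (Dp A B (m - a)).
rewrite /Mp -/x -cD addKn.
case: (boolP (A a)) => Aa; last first.
  rewrite mul0n; apply/eqP; rewrite cards_eq0; apply/eqP/setP => S.
  rewrite !inE; apply/negP => /andP[/andP[/forallP HA _] Hx].
  by have := implyP (HA _) Hx; rewrite xa (negbTE Aa).
rewrite mul1n.
have -> : Dp A B m :&: [set S : {set 'I_B.+1} | x \in S] =
          [set x |: S | S in Dp A B (m - a) :\: [set S : {set 'I_B.+1} | x \in S]].
  apply/setP => S; rewrite !inE; apply/idP/imsetP.
    move=> /andP[/andP[/forallP HA /eqP Hs] Hx].
    exists (S :\ x); last by rewrite setD1K.
    rewrite !inE eqxx /=; apply/andP; split.
      by apply/forallP => i; rewrite !inE; apply/implyP => /andP[_ Hi]; exact: (implyP (HA i) Hi).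
    by apply/eqP; move: Hs; rewrite (big_setD1 _ Hx) /= xa => <-; rewrite addKn.
  move=> [S']; rewrite !inE => /andP[Hx /andP[/forallP HA /eqP Hs]] ->.
  rewrite setU11 andbT; apply/andP; split.
    apply/forallP => i; apply/implyP; rewrite !inE => /orP[/eqP->|Hi].
      by rewrite xa.
    exact: (implyP (HA i) Hi).
  by apply/eqP; rewrite big_setU1 //= Hs xa; lia.
rewrite card_in_imset // => S1 S2; rewrite !inE => /andP[H1 _] /andP[H2 _] E.
by rewrite -(setU1K H1) -(setU1K H2) E.
Qed.
End Mrec.

Lemma N_split (A : pred nat) B m : (forall a, A a -> (0 < a)%N) -> (m <= B)%N ->
  NqA A m = (\sum_(1 <= a < m.+1) Mp A B m a)%N.
Proof.
move=> Apos mB; rewrite (NqA_Dp A mB).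
have -> : (\sum_(S in Dp A B m) #|S| =
          \sum_(S in Dp A B m) \sum_(i : 'I_B.+1) (i \in S))%N.
  by apply: eq_bigr => S _; rewrite -sum1_card big_mkcond.
rewrite exchange_big /=.
have -> : (\sum_(i : 'I_B.+1) \sum_(S in Dp A B m) (i \in S) =
           \sum_(0 <= a < B.+1) Mp A B m a)%N.
  rewrite big_mkord; apply: eq_bigr => i _; rewrite /Mp inord_val.
  rewrite -sum1_card -big_mkcondr; apply: eq_bigl => S; by rewrite !inE.
have M0 : Mp A B m 0 = 0%N.
  apply/eqP; rewrite cards_eq0; apply/eqP/setP => S.
  rewrite !inE; apply/negP => /andP[/andP[/forallP HA _] Hx].
  by have := implyP (HA _) Hx; rewrite val_inord leq0n => /Apos.
rewrite big_ltn // (big_cat_nat (n := m.+1)) //= M0 add0n.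
have -> : (\sum_(m.+1 <= a < B.+1) Mp A B m a = 0)%N.
  rewrite big_nat_cond big1 // => a /andP[/andP[Ha _] _]; exact: Mp_big.
by rewrite addn0.
Qed.

Local Open Scope ring_scope.
Lemma sum_dvd (a m : nat) (F : nat -> int) : (0 < a)%N ->
  \sum_(1 <= d < m.+1) (if (a %| d)%N then F d else 0) =
  \sum_(0 <= j < m %/ a) F (j.+1 * a)%N.
Proof.
move=> a0; elim: m => [|m IH]; first by rewrite div0n !big_geq.
rewrite big_nat_recr //= IH divnS //.
case: (boolP (a %| m.+1)%N) => H /=; last by rewrite addr0.
rewrite add1n big_nat_recr //=; congr (_ + _); congr F.
have E := divnS m a0; rewrite H add1n in E; by rewrite -E divnK.
Qed.

Section Generic.
Variables (A : pred nat) (B : nat) (f : nat -> int) (K : nat -> nat -> int).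
Hypothesis H0 : forall m a, (m <= B)%N -> (m < a)%N -> K m a = 0.
Hypothesis Hr : forall m a, (m <= B)%N -> (0 < a)%N -> (a <= m)%N ->
  K m a = (A a)%:Z * (f (m - a) - K (m - a) a).

Lemma unroll m a : (m <= B)%N -> (0 < a)%N ->
  K m a = (A a)%:Z * \sum_(0 <= j < m %/ a) (-1) ^+ j * f (m - j.+1 * a)%N.
Proof.
move=> + a0; elim/ltn_ind: m => m IH mB.
case: (ltnP m a) => ma.
  by rewrite H0 // divn_small // big_geq // mulr0.
rewrite Hr // IH; [|lia|lia].
have -> : (m %/ a = ((m - a) %/ a).+1)%N.
  have -> : m = (1 * a + (m - a))%N by lia.
  by rewrite divnMDl // add1n; congr (_ %/ _).+1; lia.
rewrite big_nat_recl //= expr0 mul1r mul1n.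
case: (A a) => /=; last by rewrite !mul0r.
rewrite !mul1r; congr (_ + _); rewrite -sumrN; apply: eq_bigr => j _.
rewrite exprS mulN1r mulNr; congr (- (_ * f _)); lia.
Qed.

Lemma generic m : (m <= B)%N ->
  \sum_(1 <= a < m.+1) K m a = \sum_(0 <= k < m) f k * tauS A (m - k).
Proof.
move=> mB.
rewrite [RHS]big_nat_rev /=; under [RHS]eq_bigr do rewrite add0n.
have E : \sum_(0 <= k < m) f (m - k.+1)%N * tauS A (m - (m - k.+1)) =
         \sum_(0 <= k < m) f (m - k.+1)%N *
           \sum_(1 <= a < m.+1) (if A a && (a %| k.+1)%N then (-1) ^+ (k.+1 %/ a).-1 else 0).
  apply: eq_big_nat => k /andP[_ km]; congr (_ * _).
  have -> : (m - (m - k.+1) = k.+1)%N by lia.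
  rewrite /tauS (big_nat_widen _ _ m.+1); last by lia.
  rewrite big_mkcond; apply: eq_big_nat => a /andP[a1 _].
  case: (A a) => //=; case: (boolP (a %| k.+1)%N) => //= H.
  by rewrite ltnS (dvdn_leq _ H).
rewrite E; under [RHS]eq_bigr do rewrite big_distrr.
rewrite [RHS]exchange_big_nat; apply: eq_big_nat => a /andP[a1 am].
rewrite (unroll mB a1).
case: (A a) => /=; last by rewrite mul0r big1 // => k _; rewrite mulr0.
rewrite mul1r.
have -> : \sum_(0 <= k < m) f (m - k.+1)%N *
      (if true && (a %| k.+1)%N then (-1) ^+ (k.+1 %/ a).-1 else 0) =
      \sum_(1 <= d < m.+1) (if (a %| d)%N then f (m - d)%N * (-1) ^+ (d %/ a).-1 else 0).
  rewrite big_add1 /=; apply: eq_bigr => k _.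
  by case: (a %| k.+1)%N; rewrite ?mulr0.
rewrite sum_dvd //; apply: eq_bigr => j _.
by rewrite mulnK // mulrC.
Qed.
End Generic.

Lemma sumz (m n : nat) (F : nat -> nat) :
  (\sum_(m <= i < n) F i)%N%:Z = \sum_(m <= i < n) (F i)%:Z.
Proof. by rewrite -natz natr_sum; apply: eq_bigr => i _; rewrite natz. Qed.

Lemma part_a (A : pred nat) m : (0 < m)%N ->
  (cl A m)%:Z = \sum_(0 <= k < m) (cl A k)%:Z * tauS A (m - k).
Proof.
move=> m0; rewrite (cl_split A m0) sumz.
apply: (@generic A m (fun k => (cl A k)%:Z) (fun m a => (Kc A m a)%:Z)) => //.
  by move=> m' a _ ma; rewrite Kc_big.
move=> m' a _ a0 am; rewrite Kc_rec // PoszM subzn //.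
by apply: sub_count => s /andP[].
Qed.

Lemma part_N (A : pred nat) m : (forall a, A a -> (0 < a)%N) ->
  (NqA A m)%:Z = \sum_(0 <= k < m) (qA A k)%:Z * tauS A (m - k).
Proof.
move=> Apos; rewrite (@N_split A m m Apos (leqnn m)) sumz.
have -> : \sum_(0 <= k < m) (qA A k)%:Z * tauS A (m - k) =
          \sum_(0 <= k < m) (#|Dp A m k|)%:Z * tauS A (m - k).
  apply: eq_big_nat => k /andP[_ km]; rewrite (qA_Dp A (m := k) (B := m)) //; lia.
apply: (@generic A m (fun k => (#|Dp A m k|)%:Z) (fun m' a => (Mp A m m' a)%:Z)) => //.
  by move=> m' a m'B ma; rewrite Mp_big.
move=> m' a m'B a0 am; rewrite Mp_rec // PoszM subzn //.
by rewrite /Mp subset_leq_card // subsetIl.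
Qed.

Lemma swap_sum (F : nat -> nat -> int) n :
  \sum_(0 <= t < n) \sum_(0 <= k < n - t) F t k =
  \sum_(0 <= k < n) \sum_(0 <= t < n - k) F t k.
Proof.
have E : forall G : nat -> nat -> int,
    \sum_(0 <= t < n) \sum_(0 <= k < n - t) G t k =
    \sum_(0 <= t < n) \sum_(0 <= k < n) (if (t + k < n)%N then G t k else 0).
  move=> G; apply: eq_big_nat => t /andP[_ tn].
  rewrite (big_nat_widen _ _ n) ?leq_subr // big_mkcond; apply: eq_bigr => k _.
  by have -> : (k < n - t)%N = (t + k < n)%N by lia.
rewrite E exchange_big_nat (E (fun t k => F k t)); apply: eq_bigr => k _.
by apply: eq_bigr => t _; rewrite addnC.
Qed.

Lemma cl0 A : cl A 0 = 1%N.
Proof. by []. Qed.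

Unset Implicit Arguments.
Theorem theorem7 (A : pred nat) (n : nat)
  (Apos : forall a : nat, A a -> (0 < a)%N) (Ane : exists a : nat, A a)
  (npos : (0 < n)%N) :
  ((cl A n)%:Z = \sum_(0 <= k < n) (cl A k)%:Z * tauS A (n - k))
  /\
  (\sum_(0 <= k < n.+1) (cl A k)%:Z * (qA A (n - k))%:Z
     - \sum_(0 <= t < n) (cl A t)%:Z * (NqA A (n - t))%:Z
   = (qA A n)%:Z).
Proof.
split; first exact: part_a.
have S1 : \sum_(0 <= t < n) (cl A t)%:Z * (NqA A (n - t))%:Z =
          \sum_(0 <= k < n) (qA A k)%:Z * (cl A (n - k))%:Z.
  under eq_bigr do rewrite (part_N _ Apos) big_distrr /=.
  rewrite swap_sum; apply: eq_big_nat => k /andP[_ kn].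
  rewrite (part_a A (m := n - k)); last by lia.
  rewrite big_distrr /=; apply: eq_bigr => t _.
  rewrite mulrCA; congr (_ * (_ * tauS A _)); lia.
have S2 : \sum_(0 <= k < n.+1) (cl A k)%:Z * (qA A (n - k))%:Z =
          \sum_(0 <= k < n) (qA A k)%:Z * (cl A (n - k))%:Z + (qA A n)%:Z.
  rewrite big_nat_rev big_nat_recr //= add0n subnn subn0 cl0 mul1r; congr (_ + _).
  apply: eq_big_nat => k /andP[_ kn]; rewrite mulrC.
  have -> : (n.+1 - k.+1 = n - k)%N by lia.
  by have -> : (n - (n - k) = k)%N by lia.
by rewrite S1 S2 addrAC subrr add0r.
Qed.
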